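(* Let $\mathcal{P}$ be a regular $n$-polytope with automorphism group $W=\langle s_0,\dots,s_{n-1}\rangle$. Let $\mathcal{Q}=\mathcal{P}/N$ be a quotient of $\mathcal{P}$ admitting the flag action of $W$, with base flag $\Psi$ chosen so that $N$ is the stabilizer of $\Psi$ in $W$. Let $\mathcal{R}$ be a regular $d$-polytope (where $d$ need not equal $n$) with $\mathrm{Aut}(\mathcal{R})=\langle\rho_0,\dots,\rho_{d-1}\rangle$, and let $\phi:\mathrm{Aut}(\mathcal{R})\to\mathrm{Aut}(\mathcal{Q})$ be a group isomorphism. For each $i$ let $\nu_i\in W$ be an element with $\Psi^{\nu_i}=\Psi(\rho_i\phi)$, and let $V=\langle\nu_0,\dots,\nu_{d-1}\rangle\le W$. Define $\psi$ from words in the $\rho_i$ to $W$ by $(\rho_{i_1}\rho_{i_2}\cdots\rho_{i_k})\psi=\nu_{i_k}\cdots\nu_{i_2}\nu_{i_1}$. Then $N\cap V$ equals the set of all elements $w\psi$, where $w$ ranges over words in the $\rho_i$ such that $w=1$ as an element of $\mathrm{Aut}(\mathcal{R})$.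
   Context: Abstract polytopes are graded posets with least and greatest faces, all flags of equal length, strongly connected, satisfying the diamond condition; a polytope is regular if its automorphism group is transitive on flags, and its automorphism group is then a string C-group generated by involutions $\rho_0,\dots,\rho_{d-1}$ (resp. $s_0,\dots,s_{n-1}$). The flag action of $W$ on the flags of $\mathcal{Q}$ is the right action in which $s_i$ sends a flag $\Phi$ to the unique flag $\Phi^{s_i}$ differing from $\Phi$ only in its face of rank $i$ (assumed well defined), with $\Phi^{vw}=(\Phi^{v})^{w}$. Automorphisms act on flags on the right, written $\Psi\alpha$, with $\Psi(\alpha\beta)=(\Psi\alpha)\beta$, and they commute with the flag action. $\mathcal{P}/N$ is the quotient of $\mathcal{P}$ by the subgroup $N\le W$. *)

(* Defs.v *)
From mathcomp Require Import all_boot.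
Set Implicit Arguments. Unset Strict Implicit. Unset Printing Implicit Defensive.

(* Ranks are shifted by one: a face of rank r (-1 <= r <= n) has [frank] r+1,
   so ranks live in 0 .. n+1 and a flag is indexed by 'I_n.+2. *)

Section PolyAxioms.
Variables (n : nat) (T : Type) (le : T -> T -> Prop) (rk : T -> nat).

Definition is_flagR (Phi : 'I_n.+2 -> T) :=
  (forall i, rk (Phi i) = i) /\
  (forall i j : 'I_n.+2, i <= j -> le (Phi i) (Phi j)).

Definition adjR (j : 'I_n.+2) (Phi Phi' : 'I_n.+2 -> T) :=
  Phi j <> Phi' j /\ (forall k, k <> j -> Phi k = Phi' k).

Definition poly_axioms :=
  (forall F, le F F) /\
  (forall F G, le F G -> le G F -> F = G) /\
  (forall F G H, le F G -> le G H -> le F H) /\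
  (forall F, rk F <= n.+1) /\
  (forall F G, le F G -> F <> G -> rk F < rk G) /\
  (exists F0, rk F0 = 0 /\ forall G, le F0 G) /\
  (exists Fn, rk Fn = n.+1 /\ forall G, le G Fn) /\
  (* gradedness: no gaps in ranks, so all flags have length n+2 *)
  (forall F G, le F G -> (rk F).+1 < rk G ->
     exists H, [/\ le F H, le H G, rk F < rk H & rk H < rk G]) /\
  (forall F G, le F G -> rk G = (rk F).+2 ->
     exists H1 H2, [/\ H1 <> H2,
       le F H1 /\ le H1 G, le F H2 /\ le H2 G &
       forall H, le F H -> le H G -> H <> F -> H <> G -> H = H1 \/ H = H2]) /\
  (forall Phi Psi, is_flagR Phi -> is_flagR Psi ->
     exists (m : nat) (pi : nat -> 'I_n.+2 -> T),
       [/\ pi 0 = Phi, pi m = Psi,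
           (forall k, k <= m -> is_flagR (pi k)),
           (forall k, k < m -> exists j, adjR j (pi k) (pi k.+1)) &
           (forall k j, k <= m -> Phi j = Psi j -> pi k j = Phi j)]).
End PolyAxioms.

Record polytope (n : nat) := Polytope {
  face : Type;
  fle : face -> face -> Prop;
  frank : face -> nat;
  polytope_ax : poly_axioms n fle frank }.

Definition flagfun n (P : polytope n) := 'I_n.+2 -> face P.
Definition is_flag n (P : polytope n) (Phi : flagfun P) :=
  is_flagR (@fle n P) (@frank n P) Phi.
Definition adj n (P : polytope n) (j : 'I_n.+2) (Phi Phi' : flagfun P) :=
  adjR j Phi Phi'.

Definition rk_idx n (i : 'I_n) : 'I_n.+2 := inord i.+1.

Record aut n (P : polytope n) := Aut {
  af : face P -> face P;
  ab : face P -> face P;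
  afK : cancel af ab;
  abK : cancel ab af;
  af_le : forall F G, fle (af F) (af G) <-> fle F G }.

Section AutGroup.
Variables (n : nat) (P : polytope n).

Lemma amul_K (a b : aut P) : cancel (af b \o af a) (ab a \o ab b).
Proof. by move=> x /=; rewrite afK afK. Qed.
Lemma amul_K' (a b : aut P) : cancel (ab a \o ab b) (af b \o af a).
Proof. by move=> x /=; rewrite abK abK. Qed.
Lemma amul_le (a b : aut P) F G :
  fle ((af b \o af a) F) ((af b \o af a) G) <-> fle F G.
Proof. rewrite /=; split=> H; [apply: (proj1 (af_le a _ _)); apply: (proj1 (af_le b _ _)) | apply: (proj2 (af_le b _ _)); apply: (proj2 (af_le a _ _))]; exact: H. Qed.

(* product "a then b" (automorphisms act on flags on the right) *)
Definition amul (a b : aut P) : aut P :=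
  Aut (@amul_K a b) (@amul_K' a b) (@amul_le a b).

Lemma id_K : cancel (@id (face P)) id. Proof. by []. Qed.
Lemma id_le (F G : face P) : fle (id F) (id G) <-> fle F G. Proof. by []. Qed.
Definition aone : aut P := Aut id_K id_K id_le.

Lemma ainv_le (a : aut P) F G : fle (ab a F) (ab a G) <-> fle F G.
Proof. split=> H; first by move: (proj2 (af_le a (ab a F) (ab a G))); rewrite !abK; apply. by apply: (proj1 (af_le a _ _)); rewrite !abK. Qed.
Definition ainv (a : aut P) : aut P := Aut (abK a) (afK a) (@ainv_le a).
End AutGroup.

Definition fact n (P : polytope n) (Phi : flagfun P) (a : aut P) : flagfun P :=
  fun i => af a (Phi i).

Definition is_regular n (P : polytope n) :=
  forall Phi Phi', is_flag Phi -> is_flag Phi' ->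
    exists a : aut P, fact Phi a = Phi'.

Definition distinguished_gens n (P : polytope n) (Phi : flagfun P)
  (rho : 'I_n -> aut P) :=
  forall i, adj (rk_idx i) Phi (fact Phi (rho i)).

Definition flag_action n (P Q : polytope n) (s : 'I_n -> aut P)
  (act : flagfun Q -> aut P -> flagfun Q) :=
  [/\ forall Phi w, is_flag Phi -> is_flag (act Phi w),
      forall Phi, is_flag Phi -> act Phi (aone P) = Phi,
      forall Phi v w, is_flag Phi -> act Phi (amul v w) = act (act Phi v) w &
      forall Phi i, is_flag Phi -> adj (rk_idx i) Phi (act Phi (s i))].

Definition aut_iso d n (R : polytope d) (Q : polytope n)
  (phi : aut R -> aut Q) :=
  [/\ forall a b, phi (amul a b) = amul (phi a) (phi b),
      injective phi &
      forall b, exists a, phi a = b].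

(* Group words in generators g_0..g_{d-1}: a letter (i, true) is g_i and
   (i, false) is g_i^{-1}; [weval g w] is the product, left to right. *)
Definition weval n (P : polytope n) d (g : 'I_d -> aut P)
  (w : seq ('I_d * bool)) : aut P :=
  foldr (fun x acc => amul (if x.2 then g x.1 else ainv (g x.1)) acc)
        (aone P) w.

Definition psi n (P : polytope n) d (nu : 'I_d -> aut P)
  (w : seq ('I_d * bool)) : aut P := weval nu (rev w).

Definition gen_subgroup n (P : polytope n) d (g : 'I_d -> aut P) (v : aut P) :=
  exists w, v = weval g w.

(* Main.v *)
Require Import Defs.
From mathcomp Require Import all_boot.
From mathcomp Require Import zify.
From Stdlib Require Import FunctionalExtensionality ProofIrrelevance Classical.
Set Implicit Arguments. Unset Strict Implicit. Unset Printing Implicit Defensive.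

Lemma aut_eq n (X : polytope n) (a b : aut X) : af a =1 af b -> a = b.
Proof.
case: a => fa ba Ka K'a La; case: b => fb bb Kb K'b Lb /= E.
have Ef : fa = fb by apply: functional_extensionality.
subst fb.
have Eb : ba = bb.
  apply: functional_extensionality => x.
  by rewrite -{1}(K'b x) Ka.
subst bb.
have -> : Ka = Kb by apply: proof_irrelevance.
have -> : K'a = K'b by apply: proof_irrelevance.
have -> : La = Lb by apply: proof_irrelevance.
by [].
Qed.

Lemma amulA n (X : polytope n) (a b c : aut X) : amul (amul a b) c = amul a (amul b c).
Proof. by apply: aut_eq. Qed.
Lemma amul1l n (X : polytope n) (a : aut X) : amul (aone X) a = a.
Proof. by apply: aut_eq. Qed.
Lemma amul1r n (X : polytope n) (a : aut X) : amul a (aone X) = a.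
Proof. by apply: aut_eq. Qed.
Lemma amulV n (X : polytope n) (a : aut X) : amul a (ainv a) = aone X.
Proof. by apply: aut_eq => x /=; rewrite afK. Qed.
Lemma amulVl n (X : polytope n) (a : aut X) : amul (ainv a) a = aone X.
Proof. by apply: aut_eq => x /=; rewrite abK. Qed.


Lemma ax_all n (X : polytope n) : poly_axioms n (@fle n X) (@frank n X).
Proof. exact: polytope_ax. Qed.

Lemma le_refl n (X : polytope n) (F : face X) : fle F F.
Proof. by case: (ax_all X). Qed.
Lemma le_trans' n (X : polytope n) (F G H : face X) : fle F G -> fle G H -> fle F H.
Proof. by case: (ax_all X) => _ [_ [T _]]; apply: T. Qed.
Lemma rk_bound n (X : polytope n) (F : face X) : frank F <= n.+1.
Proof. by case: (ax_all X) => _ [_ [_ [T _]]]; apply: T. Qed.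
Lemma rk_lt n (X : polytope n) (F G : face X) : fle F G -> F <> G -> frank F < frank G.
Proof. by case: (ax_all X) => _ [_ [_ [_ [T _]]]]; apply: T. Qed.
Lemma ax_bot n (X : polytope n) : exists F0 : face X, frank F0 = 0 /\ forall G, fle F0 G.
Proof. by case: (ax_all X) => _ [_ [_ [_ [_ [T _]]]]]. Qed.
Lemma ax_top n (X : polytope n) : exists Fn : face X, frank Fn = n.+1 /\ forall G, fle G Fn.
Proof. by case: (ax_all X) => _ [_ [_ [_ [_ [_ [T _]]]]]]. Qed.
Lemma ax_grad n (X : polytope n) (F G : face X) : fle F G -> (frank F).+1 < frank G ->
     exists H, [/\ fle F H, fle H G, frank F < frank H & frank H < frank G].
Proof. by case: (ax_all X) => _ [_ [_ [_ [_ [_ [_ [T _]]]]]]]; apply: T. Qed.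
Lemma ax_diamond n (X : polytope n) (F G : face X) : fle F G -> frank G = (frank F).+2 ->
     exists H1 H2, [/\ H1 <> H2,
       fle F H1 /\ fle H1 G, fle F H2 /\ fle H2 G &
       forall H, fle F H -> fle H G -> H <> F -> H <> G -> H = H1 \/ H = H2].
Proof. by case: (ax_all X) => _ [_ [_ [_ [_ [_ [_ [_ [T _]]]]]]]]; apply: T. Qed.
Lemma ax_conn n (X : polytope n) (Phi Psi : flagfun X) : is_flag Phi -> is_flag Psi ->
     exists (m : nat) (pi : nat -> 'I_n.+2 -> face X),
       [/\ pi 0 = Phi, pi m = Psi,
           (forall k, k <= m -> is_flag (pi k)),
           (forall k, k < m -> exists j, adj j (pi k) (pi k.+1)) &
           (forall k j, k <= m -> Phi j = Psi j -> pi k j = Phi j)].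
Proof. by case: (ax_all X) => _ [_ [_ [_ [_ [_ [_ [_ [_ T]]]]]]]]; apply: T. Qed.

Lemma le_rk n (X : polytope n) (F G : face X) : fle F G -> frank F <= frank G.
Proof.
move=> H; case: (classic (F = G)) => [->//|NE].
by apply: ltnW; apply: rk_lt.
Qed.

Definition chainP n (X : polytope n) (F G : face X) (c : nat -> face X) :=
  [/\ c (frank F) = F, c (frank G) = G,
    (forall i, frank F <= i -> i <= frank G -> frank (c i) = i) &
    (forall i j, frank F <= i -> i <= j -> j <= frank G -> fle (c i) (c j))].

Lemma chain_small n (X : polytope n) (F G : face X) :
  fle F G -> frank G <= (frank F).+1 -> exists c, chainP F G c.
Proof.
move=> HFG Hs.
case: (ltnP (frank F) (frank G)) => Hl.
  exists (fun i => if i <= frank F then F else G); split.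
  - by rewrite leqnn.
  - by rewrite leqNgt Hl.
  - move=> i H1 H2; case: ifP => Hi; lia.
  - move=> i j H1 H2 H3; case: ifP => Hi; case: ifP => Hj.
    + exact: le_refl.
    + exact: HFG.
    + lia.
    + exact: le_refl.
have E : F = G.
  apply: NNPP => NE; have := rk_lt HFG NE; lia.
subst G; exists (fun _ => F); split => //; try (move=> i H1 H2; lia);
  try (move=> *; exact: le_refl).
Qed.

Lemma glue n (X : polytope n) (F H G : face X) c1 c2 :
  fle F H -> fle H G -> chainP F H c1 -> chainP H G c2 ->
  chainP F G (fun i => if i <= frank H then c1 i else c2 i).
Proof.
move=> HFH HHG [a1 b1 r1 l1] [a2 b2 r2 l2].
have rFH := le_rk HFH; have rHG := le_rk HHG.
split.
- by rewrite rFH.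
- case: ifP => Hi; last by [].
  have E : frank G = frank H by lia.
  by rewrite E b1 -a2 -E b2.
- move=> i H1 H2; case: ifP => Hi; [apply: r1 | apply: r2]; lia.
- move=> i j H1 H2 H3; case: ifP => Hi; case: ifP => Hj.
  + apply: l1; lia.
  + apply: le_trans' (l1 i (frank H) _ _ _) _; try lia.
    rewrite b1 -{1}a2; apply: l2; lia.
  + lia.
  + apply: l2; lia.
Qed.

Lemma chain_lemma n (X : polytope n) m (F G : face X) :
  frank G - frank F <= m -> fle F G -> exists c, chainP F G c.
Proof.
elim: m F G => [|m IH] F G Hm HFG.
  apply: chain_small => //; lia.
case: (leqP (frank G) (frank F).+1) => Hs; first exact: chain_small.
have [H [HFH HHG H1 H2]] := ax_grad HFG Hs.
have [c1 C1] : exists c, chainP F H c by apply: IH => //; lia.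
have [c2 C2] : exists c, chainP H G c by apply: IH => //; lia.
by eexists; apply: glue C1 C2.
Qed.

Lemma af_inj n (X : polytope n) (a : aut X) : injective (af a).
Proof. exact: can_inj (afK a). Qed.

Lemma rk_af_ge n (X : polytope n) r : forall (a : aut X) (F : face X),
  frank F = r -> r <= frank (af a F).
Proof.
elim: r => [//|r IH] a F HF.
have [F0 [r0 b0]] := ax_bot X.
have [c [c1 c2 c3 c4]] := chain_lemma (leqnn _) (b0 F).
have rG : frank (c r) = r by rewrite c3; lia.
have lG : fle (c r) F.
  have := c4 r (frank F) ltac:(lia) ltac:(lia) ltac:(lia); by rewrite c2.
have NE : c r <> F by move=> E; move: rG; rewrite E; lia.
have := IH a _ rG.
have : frank (af a (c r)) < frank (af a F).
  apply: rk_lt; first by apply/af_le.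
  by move=> E; apply: NE; apply: af_inj E.
lia.
Qed.

Lemma rk_af n (X : polytope n) (a : aut X) (F : face X) : frank (af a F) = frank F.
Proof.
apply/eqP; rewrite eqn_leq; apply/andP; split; last exact: rk_af_ge.
have := @rk_af_ge n X (frank (af a F)) (ainv a) (af a F) erefl.
by rewrite /= afK.
Qed.

Lemma flag_rk n (X : polytope n) (Phi : flagfun X) : is_flag Phi -> forall i, frank (Phi i) = i.
Proof. by case. Qed.
Lemma flag_le n (X : polytope n) (Phi : flagfun X) : is_flag Phi ->
  forall i j : 'I_n.+2, i <= j -> fle (Phi i) (Phi j).
Proof. by case. Qed.

Lemma fact_flag n (X : polytope n) (Phi : flagfun X) a : is_flag Phi -> is_flag (fact Phi a).
Proof.
move=> [H1 H2]; split => [i|i j Hij]; rewrite /fact.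
  by rewrite rk_af H1.
by apply/af_le; apply: H2.
Qed.

Lemma fact_adj n (X : polytope n) (Phi Phi' : flagfun X) a j :
  adj j Phi Phi' -> adj j (fact Phi a) (fact Phi' a).
Proof.
move=> [H1 H2]; split; rewrite /fact.
  by move=> E; apply: H1; apply: af_inj E.
by move=> k Hk; rewrite H2.
Qed.

Lemma rk0_eq n (X : polytope n) (F G : face X) : frank F = 0 -> frank G = 0 -> F = G.
Proof.
have [F0 [r0 b0]] := ax_bot X.
have E : forall H : face X, frank H = 0 -> F0 = H.
  move=> H rH; apply: NNPP => NE; have := rk_lt (b0 H) NE; lia.
by move=> /E <- /E <-.
Qed.

Lemma rktop_eq n (X : polytope n) (F G : face X) : frank F = n.+1 -> frank G = n.+1 -> F = G.
Proof.
have [F0 [r0 b0]] := ax_top X.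
have E : forall H : face X, frank H = n.+1 -> H = F0.
  move=> H rH; apply: NNPP => NE; have := rk_lt (b0 H) NE; lia.
by move=> /E -> /E ->.
Qed.

Lemma adj_mid n (X : polytope n) (Phi Phi' : flagfun X) j :
  is_flag Phi -> is_flag Phi' -> adj j Phi Phi' -> 0 < j < n.+1.
Proof.
move=> f1 f2 [H1 _].
have rj := flag_rk f1 j; have rj' := flag_rk f2 j.
have lj := ltn_ord j.
case: (posnP j) => [j0|jp].
  by exfalso; apply: H1; apply: rk0_eq; rewrite ?rj ?rj'.
case: (ltnP j n.+1) => [jl|jn]; first by apply/andP.
exfalso; apply: H1; apply: rktop_eq; rewrite ?rj ?rj'; lia.
Qed.

Lemma adj_unique n (X : polytope n) (Phi P1 P2 : flagfun X) j :
  is_flag Phi -> is_flag P1 -> is_flag P2 -> adj j Phi P1 -> adj j Phi P2 -> P1 = P2.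
Proof.
move=> f f1 f2 A1 A2.
have /andP [j0 jn] := adj_mid f f1 A1.
pose jm : 'I_n.+2 := inord j.-1.
pose jp : 'I_n.+2 := inord j.+1.
have vjm : (jm : nat) = j.-1 by rewrite inordK //; lia.
have vjp : (jp : nat) = j.+1 by rewrite inordK //; lia.
have njm : jm <> j by move=> E; move: vjm; rewrite E; lia.
have njp : jp <> j by move=> E; move: vjp; rewrite E; lia.
case: A1 => [d1 e1]; case: A2 => [d2 e2].
have lFG : fle (Phi jm) (Phi jp) by apply: flag_le => //; lia.
have rFG : frank (Phi jp) = (frank (Phi jm)).+2.
  by rewrite !(flag_rk f) vjm vjp; lia.
have [H1 [H2 [_ _ _ Hd]]] := ax_diamond lFG rFG.
have inI : forall Q : flagfun X, is_flag Q -> Q jm = Phi jm -> Q jp = Phi jp ->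
    Q j = H1 \/ Q j = H2.
  move=> Q fQ Em Ep; apply: Hd.
  - by rewrite -Em; apply: flag_le => //; lia.
  - by rewrite -Ep; apply: flag_le => //; lia.
  - move=> E; have := flag_rk fQ j; rewrite E flag_rk // vjm; lia.
  - move=> E; have := flag_rk fQ j; rewrite E flag_rk // vjp; lia.
have h0 := inI Phi f erefl erefl.
have h1 := inI P1 f1 (esym (e1 _ njm)) (esym (e1 _ njp)).
have h2 := inI P2 f2 (esym (e2 _ njm)) (esym (e2 _ njp)).
apply: functional_extensionality => k.
case: (eqVneq k j) => [->|nk]; last by rewrite -e1 ?e2 //; apply/eqP.
case: h0 => E0; case: h1 => E1; case: h2 => E2; congruence.
Qed.

Lemma flag_through n (X : polytope n) (F : face X) :
  exists Phi : flagfun X, is_flag Phi /\ exists i, Phi i = F.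
Proof.
have [F0 [r0 b0]] := ax_bot X.
have [Fn [rn bn]] := ax_top X.
have [c1 C1] := chain_lemma (leqnn _) (b0 F).
have [c2 C2] := chain_lemma (leqnn _) (bn F).
have [g1 g2 g3 g4] := glue (b0 F) (bn F) C1 C2.
exists (fun i : 'I_n.+2 => if (i : nat) <= frank F then c1 i else c2 i); split.
  split.
    move=> i; have := ltn_ord i => Hi; have := g3 (nat_of_ord i); rewrite r0 rn; move=> G3; rewrite G3 //; lia.
  move=> i j Hij; have := ltn_ord j => Hj; have := g4 (nat_of_ord i) (nat_of_ord j); rewrite r0 rn => G4; apply: G4 => //; lia.
exists (inord (frank F)).
have := rk_bound F => HB.
rewrite inordK ?leqnn; last by lia.
by case: C1.
Qed.

Lemma free n (X : polytope n) (Phi : flagfun X) (a : aut X) :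
  is_flag Phi -> fact Phi a = Phi -> a = aone X.
Proof.
move=> fP Hfx.
have all : forall Phi', is_flag Phi' -> fact Phi' a = Phi'.
  move=> Phi' fP'.
  have [m [pi [p0 pm pf pa _]]] := ax_conn fP fP'.
  suff : forall k, k <= m -> fact (pi k) a = pi k by move=> /(_ m (leqnn _)); rewrite pm.
  elim => [_|k IH Hk]; first by rewrite p0.
  have [j Aj] := pa k Hk.
  have IH' := IH (ltnW Hk).
  apply: (@adj_unique n X (pi k) _ _ j).
  - exact: pf (ltnW Hk).
  - exact: fact_flag (pf _ Hk).
  - exact: pf _ Hk.
  - by rewrite -{1}IH'; apply: fact_adj.
  - exact: Aj.
apply: aut_eq => F.
have [Phi' [fP' [i Ei]]] := flag_through F.
have := all _ fP'; move/(congr1 (fun f => f i)); rewrite /fact Ei => ->.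
by [].
Qed.

Definition sprod n (P : polytope n) (s : 'I_n -> aut P) (u : seq 'I_n) : aut P :=
  foldr (fun i acc => amul (s i) acc) (aone P) u.

Lemma fact_amul n (X : polytope n) (Phi : flagfun X) a b :
  fact (fact Phi a) b = fact Phi (amul a b).
Proof. by []. Qed.
Lemma fact_one n (X : polytope n) (Phi : flagfun X) : fact Phi (aone X) = Phi.
Proof. by []. Qed.

Lemma fact_inj n (X : polytope n) (Phi : flagfun X) a b :
  is_flag Phi -> fact Phi a = fact Phi b -> a = b.
Proof.
move=> fP E.
have : amul a (ainv b) = aone X.
  apply: (free fP).
  by rewrite -fact_amul E fact_amul amulV.
move=> H.
by rewrite -[a]amul1r -(amulVl b) -amulA H amul1l.
Qed.

Lemma gen n (P : polytope n) (PhiP : flagfun P) (s : 'I_n -> aut P) :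
  is_flag PhiP -> distinguished_gens PhiP s -> forall a, exists u, a = sprod s u.
Proof.
move=> fP Hs a.
have fa := fact_flag a fP.
have [m [pi [p0 pm pf pa _]]] := ax_conn fP fa.
suff : forall k, k <= m -> exists u, fact PhiP (sprod s u) = pi k.
  move=> /(_ m (leqnn _)) [u Hu]; exists u.
  by apply: (fact_inj fP); rewrite Hu pm.
elim => [_|k IH Hk]; first by exists [::]; rewrite p0.
have [u Hu] := IH (ltnW Hk).
have [j Aj] := pa k Hk.
have /andP [j0 jn] := adj_mid (pf _ (ltnW Hk)) (pf _ Hk) Aj.
have ji : j.-1 < n by lia.
pose i : 'I_n := Ordinal ji.
have Ei : rk_idx i = j.
  apply: val_inj; rewrite /= inordK /=; lia.
exists (i :: u).
apply: (@adj_unique n P (pi k) _ _ j).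
- exact: pf (ltnW Hk).
- exact: fact_flag.
- exact: pf _ Hk.
- rewrite -Hu /= -fact_amul -Ei; apply: fact_adj; exact: Hs.
- exact: Aj.
Qed.

Lemma commute n (P Q : polytope n) (PhiP : flagfun P) (s : 'I_n -> aut P)
  (act : flagfun Q -> aut P -> flagfun Q) :
  is_flag PhiP -> distinguished_gens PhiP s -> flag_action s act ->
  forall (Phi : flagfun Q) (b : aut Q) (a : aut P), is_flag Phi ->
  act (fact Phi b) a = fact (act Phi a) b.
Proof.
move=> fP Hs [Hf H1 Hm Ha] Phi b a fPhi.
have [u ->] := gen fP Hs a.
elim: u Phi fPhi => [|i u IH] Phi fPhi /=.
  by rewrite !H1 //; apply: fact_flag.
rewrite !Hm //; last exact: fact_flag.
have -> : act (fact Phi b) (s i) = fact (act Phi (s i)) b.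
  apply: (@adj_unique n Q (fact Phi b) _ _ (rk_idx i)).
  - exact: fact_flag.
  - by apply: Hf; apply: fact_flag.
  - by apply: fact_flag; apply: Hf.
  - by apply: Ha; apply: fact_flag.
  - by apply: fact_adj; apply: Ha.
by apply: IH; apply: Hf.
Qed.

Lemma weval_rcons n (X : polytope n) d (g : 'I_d -> aut X) l x :
  weval g (rcons l x) = amul (weval g l) (if x.2 then g x.1 else ainv (g x.1)).
Proof.
elim: l => [|y l IH] /=; first by rewrite amul1r amul1l.
by rewrite IH amulA.
Qed.

Lemma hom1 d n (R : polytope d) (Q : polytope n) (phi : aut R -> aut Q) :
  aut_iso phi -> phi (aone R) = aone Q.
Proof.
move=> [Hm _ _].
have E := Hm (aone R) (aone R); rewrite amul1l in E.
by rewrite -[phi _]amul1l -(amulVl (phi (aone R))) amulA -E.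
Qed.

Theorem theorem4 (n d : nat)
  (P : polytope n) (PhiP : flagfun P) (s : 'I_n -> aut P)
  (HPreg : is_regular P) (HPhiP : is_flag PhiP)
  (Hs : distinguished_gens PhiP s)
  (Q : polytope n) (act : flagfun Q -> aut P -> flagfun Q)
  (Hact : flag_action s act)
  (Psi : flagfun Q) (HPsi : is_flag Psi)
  (N : aut P -> Prop) (HN : forall w, N w <-> act Psi w = Psi)
  (R : polytope d) (PhiR : flagfun R) (rho : 'I_d -> aut R)
  (HRreg : is_regular R) (HPhiR : is_flag PhiR)
  (Hrho : distinguished_gens PhiR rho)
  (phi : aut R -> aut Q) (Hphi : aut_iso phi)
  (nu : 'I_d -> aut P)
  (Hnu : forall i, act Psi (nu i) = fact Psi (phi (rho i))) :
  forall v : aut P,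
    (N v /\ gen_subgroup nu v) <->
    (exists w : seq ('I_d * bool), weval rho w = aone R /\ v = psi nu w).
Proof.
have Hcom := commute HPhiP Hs Hact.
have [Hf H1 Hm Ha] := Hact.
have [Hhom Hinj _] := Hphi.
have Hph1 := hom1 Hphi.
have Hinv : forall i, act Psi (ainv (nu i)) = fact Psi (phi (ainv (rho i))).
  move=> i.
  set g := phi (ainv (rho i)).
  have fg : is_flag (fact Psi g) by apply: fact_flag.
  have E : act (fact Psi g) (nu i) = Psi.
    by rewrite Hcom // Hnu fact_amul -Hhom amulV Hph1.
  by rewrite -{1}E -Hm // amulV H1.
have key : forall w, act Psi (psi nu w) = fact Psi (phi (weval rho w)).
  elim => [|[i b] w IH].
    by rewrite /psi /= H1 // Hph1.
  rewrite /psi rev_cons weval_rcons -/(psi nu w) Hm // IH Hcom //.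
  case: b => /=.
    by rewrite Hnu fact_amul -Hhom.
  by rewrite Hinv fact_amul -Hhom.
move=> v; split.
  move=> [/HN Nv [w' Ew']].
  exists (rev w'); split; last by rewrite /psi revK.
  apply: Hinj; rewrite Hph1.
  apply: (free HPsi).
  by rewrite -key /psi revK -Ew'.
move=> [w [Ew ->]]; split.
  by apply/HN; rewrite key Ew Hph1.
by exists (rev w).
Qed.
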